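(* Let $\mathcal{G}$ be an $n$-dimensional real Lie algebra with basis $\{e_i\}_{1\le i\le n}$ and structure constants $[e_i,e_j]=\sum_k c_{ij}^k e_k$, and let $(x_1,\dots,x_n)$ be the linear coordinates on $\mathcal{G}^*$ with respect to the dual basis $\{e^i\}$. Equip $\mathcal{G}^*$ with the Lie-Poisson structure $\pi^{ij}(x_ue^u)=\sum_k c_{ij}^k x_k$ and the volume form $dx_1\wedge\dots\wedge dx_n$. Then a function $f\in C^\infty(\mathcal{G}^* )$ is a last multiplier of its Hamiltonian vector field $A_f$ if and only if $$\sum_{i,j=1}^n c_{ij}^j\frac{\partial f}{\partial x_i}=0.$$
   Context: The Poisson bracket is $\{g,h\}=\sum_{i,j}\pi^{ij}\frac{\partial g}{\partial x_i}\frac{\partial h}{\partial x_j}$, and for $h\in C^\infty(\mathcal{G}^* )$ the Hamiltonian vector field is defined by $A_h(g)=\{h,g\}$. For a vector field $A$, $\operatorname{div}A$ is defined by $L_A V=(\operatorname{div}A)V$ with $V=dx_1\wedge\dots\wedge dx_n$. A function $m$ is a last multiplier of $A$ if $d(m\,i_AV)=0$, equivalently $A(m)+m\operatorname{div}A=0$. *)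

(* Defs.v *)
(* R : realType, G^* identified with 'rV[R]_n
   via the linear coordinates x_k = x ord0 k. *)
From HB Require Import structures.
From mathcomp Require Import all_boot all_order all_algebra.
From mathcomp Require Import all_classical all_reals all_analysis.
Set Implicit Arguments. Unset Strict Implicit. Unset Printing Implicit Defensive.
Import Order.TTheory GRing.Theory Num.Theory.
Import numFieldNormedType.Exports.
Local Open Scope ring_scope.

Section Defs.
Variables (R : realType) (n : nat).

(* structure constants: c i j k = c_{ij}^k, i.e. [e_i,e_j] = sum_k c_{ij}^k e_k *)
Definition lie_structure_constants (c : 'I_n -> 'I_n -> 'I_n -> R) : Prop :=
  (forall i j k, c i j k = - c j i k) /\
  (forall i j k m, \sum_(l < n) (c i j l * c l k m + c j k l * c l i m
                                  + c k i l * c l j m) = 0).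

Definition coord (i : 'I_n) (x : 'rV[R]_n) : R := x ord0 i.

Definition partial (i : 'I_n) (g : 'rV[R]_n -> R) : 'rV[R]_n -> R :=
  fun x => 'D_(delta_mx ord0 i : 'rV[R]_n) g x.

Definition iter_partial (s : seq 'I_n) (g : 'rV[R]_n -> R) : 'rV[R]_n -> R :=
  foldr partial g s.

Definition smooth (g : 'rV[R]_n -> R) : Prop :=
  forall (s : seq 'I_n) (x : 'rV[R]_n), differentiable (iter_partial s g) x.

Definition lie_poisson (c : 'I_n -> 'I_n -> 'I_n -> R) (i j : 'I_n)
  (x : 'rV[R]_n) : R := \sum_(k < n) c i j k * coord k x.

Definition poisson_bracket c (g h : 'rV[R]_n -> R) (x : 'rV[R]_n) : R :=
  \sum_(i < n) \sum_(j < n) lie_poisson c i j x * partial i g x * partial j h x.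

(* vector fields on G^* given by their components A^j *)
Definition vfield := 'I_n -> 'rV[R]_n -> R.

(* Hamiltonian vector field A_h, A_h(g) = {h,g}: components A_h^j = sum_i pi^{ij} dh/dx_i *)
Definition ham_vf c (h : 'rV[R]_n -> R) : vfield :=
  fun j x => \sum_(i < n) lie_poisson c i j x * partial i h x.

Definition vf_apply (A : vfield) (g : 'rV[R]_n -> R) (x : 'rV[R]_n) : R :=
  \sum_(j < n) A j x * partial j g x.

(* divergence w.r.t. V = dx_1 /\ ... /\ dx_n: L_A V = (div A) V, i.e.
   div A = sum_j dA^j/dx_j *)
Definition divergence (A : vfield) (x : 'rV[R]_n) : R :=
  \sum_(j < n) partial j (A j) x.

Definition last_multiplier (A : vfield) (m : 'rV[R]_n -> R) : Prop :=
  forall x, vf_apply A m x + m x * divergence A x = 0.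

End Defs.

(* Main.v *)
Require Import Defs.
From HB Require Import structures.
From mathcomp Require Import all_boot all_order all_algebra.
From mathcomp Require Import all_classical all_reals all_analysis.
From mathcomp Require Import ring lra.
Import Order.TTheory GRing.Theory Num.Theory.
Import numFieldNormedType.Exports.
Local Open Scope ring_scope.
Local Open Scope classical_set_scope.

Section Aux.
Variables (R : realType) (n : nat).
Local Notation V := 'rV[R]_n.

Lemma lin_is_derive (L : V -> R) x v :
  (forall a b, L (a + b) = L a + L b) -> (forall (h:R) a, L (h *: a) = h * L a) ->
  is_derive x v L (L v).
Proof.
move=> LD LZ.
have H : (fun h : R => h^-1 *: ((L \o shift x) (h *: v) - L x)) @ 0^' --> L v.
  apply: cvg_near_cst; near=> h.
  have hn0 : h != 0 by near: h; exact: nbhs_dnbhs_neq.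
  by rewrite /= LD LZ addrK [_ *: _]mulrA mulVf // mul1r.
split; [apply/cvg_ex; exists (L v); exact: H | exact: cvg_lim H].
Unshelve. all: by end_near. Qed.

Lemma line_is_derive (g : V -> R) x v s : derivable g (s *: v + x) v ->
  is_derive s 1 (fun t : R => g (t *: v + x)) ('D_v g (s *: v + x)).
Proof.
move=> dg.
have E : (fun h : R => h^-1 *: (((fun t : R => g (t *: v + x)) \o shift s) (h *: 1)
     - g (s *: v + x))) =
   (fun h : R => h^-1 *: ((g \o shift (s *: v + x)) (h *: v) - g (s *: v + x))).
  apply/funext => h /=.
  have -> : h *: (1:R) = h by rewrite /GRing.scale /= mulr1.
  by rewrite scalerDl addrA.
split; [rewrite /derivable E; exact: dg | by rewrite /derive E].
Qed.

Lemma line_derivable_all (g : V -> R) (x v : V) :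
  (forall y, derivable g y v) -> forall s : R, is_derive s 1 (fun t : R => g (t *: v + x)) ('D_v g (s *: v + x)).
Proof. by move=> dg s; apply: line_is_derive. Qed.

Lemma delta_mvt (g : V -> R) x u v h : 0 < h ->
  (forall y, derivable g y v) -> (forall y, derivable ('D_v g) y u) ->
  exists r t, [/\ 0 < r < h, 0 < t < h &
    g (h *: u + (h *: v + x)) - g (h *: u + x) - g (h *: v + x) + g x
      = h * h * 'D_u ('D_v g) (r *: u + (t *: v + x))].
Proof.
move=> h0 dg ddg.
set phi := fun s : R => g (s *: v + (h *: u + x)) - g (s *: v + x).
have Dphi : forall s : R, is_derive s 1 phi
   ('D_v g (s *: v + (h *: u + x)) - 'D_v g (s *: v + x)).
  move=> s; apply: is_deriveB; exact: line_derivable_all.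
have [t t_in Ht] := @MVT R phi (fun s => 'D_v g (s *: v + (h *: u + x)) - 'D_v g (s *: v + x)) 0 h h0 (fun s _ => Dphi s)
  (derivable_within_continuous (fun s _ => @ex_derive _ _ _ _ _ _ _ (Dphi s))).
set psi := fun r : R => 'D_v g (r *: u + (t *: v + x)).
have Dpsi : forall r : R, is_derive r 1 psi ('D_u ('D_v g) (r *: u + (t *: v + x))).
  by move=> r; exact: line_derivable_all.
have [r r_in Hr] := @MVT R psi (fun r => 'D_u ('D_v g) (r *: u + (t *: v + x))) 0 h h0 (fun s _ => Dpsi s)
  (derivable_within_continuous (fun s _ => @ex_derive _ _ _ _ _ _ _ (Dpsi s))).
exists r, t; split.
- by move: r_in; rewrite in_itv.
- by move: t_in; rewrite in_itv.
move: Ht Hr; rewrite /phi /psi !scale0r !add0r !subr0 => Ht Hr.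
have E1 : h *: v + (h *: u + x) = h *: u + (h *: v + x).
  by rewrite addrA (addrC (h *: v)) addrA.
have E2 : t *: v + (h *: u + x) = h *: u + (t *: v + x).
  by rewrite addrA (addrC (t *: v)) addrA.
rewrite E1 E2 in Ht.
rewrite Hr in Ht.
have -> : g (h *: u + (h *: v + x)) - g (h *: u + x) - g (h *: v + x) + g x
   = g (h *: u + (h *: v + x)) - g (h *: v + x) - (g (h *: u + x) - g x) by ring.
by rewrite Ht; ring.
Qed.

Lemma clairaut (g : V -> R) (x u v : V) :
  (forall y, derivable g y u) -> (forall y, derivable g y v) ->
  (forall y, derivable ('D_v g) y u) -> (forall y, derivable ('D_u g) y v) ->
  {for x, continuous ('D_u ('D_v g))} -> {for x, continuous ('D_v ('D_u g))} ->
  'D_u ('D_v g) x = 'D_v ('D_u g) x.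
Proof.
move=> du dv dvu duv ca cb.
have [E|ab] := eqVneq ('D_u ('D_v g) x) ('D_v ('D_u g) x); [exact: E | exfalso].
set e := `|'D_u ('D_v g) x - 'D_v ('D_u g) x| / 2.
have e0 : 0 < e by rewrite divr_gt0 // normr_gt0 subr_eq0.
have Ca := cvgr_dist_lt _ _ ca _ e0.
have Cb := cvgr_dist_lt _ _ cb _ e0.
have /nbhs_normP [d1 /= d10 Hd1] := Ca (nbhs_filter x).
have /nbhs_normP [d2 /= d20 Hd2] := Cb (nbhs_filter x).
set d := Num.min d1 d2.
have d0 : 0 < d by rewrite lt_min d10 d20.
have [dd1 dd2] : d <= d1 /\ d <= d2.
  by have := le_refl d; rewrite {2}/d le_min => /andP[].
have uv0 : 0 < `|u| + `|v| + 1.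
  apply: (lt_le_trans ltr01); rewrite -[X in X <= _]add0r lerD2r.
  exact: addr_ge0 (normr_ge0 _) (normr_ge0 _).
set h := d / (`|u| + `|v| + 1).
have h0 : 0 < h by rewrite divr_gt0.
have hd : h * (`|u| + `|v| + 1) = d by rewrite /h mulfVK // gt_eqF.
have inb : forall (p q : R) (w1 w2 : V), 0 < p < h -> 0 < q < h ->
    `|w1| + `|w2| = `|u| + `|v| -> `|x - (p *: w1 + (q *: w2 + x))| < d.
  move=> p q w1 w2 /andP[p0 ph] /andP[q0 qh] nw.
  rewrite addrA opprD addrCA subrr addr0 normrN.
  apply: (le_lt_trans (ler_normD _ _)).
  rewrite !normrZ !ger0_norm ?ltW //.
  have n1 := normr_ge0 w1; have n2 := normr_ge0 w2.
  have H1 : p * `|w1| <= h * `|w1| by rewrite ler_wpM2r // ltW.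
  have H2 : q * `|w2| <= h * `|w2| by rewrite ler_wpM2r // ltW.
  rewrite -hd.
  have -> : h * (`|u| + `|v| + 1) = h * `|w1| + h * `|w2| + h by rewrite -nw !mulrDr mulr1.
  by apply: (le_lt_trans (lerD H1 H2)); rewrite ltrDl.
have [r [t [rh th E1]]] := delta_mvt g x u v h h0 dv dvu.
have [r' [t' [rh' th' E2]]] := delta_mvt g x v u h h0 du duv.
rewrite (addrA (h *: v)) (addrC (h *: v)) -addrA in E2.
have AB : 'D_u ('D_v g) (r *: u + (t *: v + x)) = 'D_v ('D_u g) (r' *: v + (t' *: u + x)).
  apply: (mulfI (_ : h * h != 0)); first by rewrite mulf_neq0 // gt_eqF.
  by rewrite -[in RHS]E2 -[in LHS]E1; congr (_ + _); exact: addrAC.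
have A1 := Hd1 _ (lt_le_trans (inb _ _ _ _ rh th erefl) dd1).
have B1 := Hd2 _ (lt_le_trans (inb _ _ _ _ rh' th' (addrC _ _)) dd2).
rewrite AB in A1.
move: A1 B1; set B := 'D_v ('D_u g) (r' *: v + (t' *: u + x)) => A1 B1.
have H := ler_normB ('D_u ('D_v g) x - B) ('D_v ('D_u g) x - B).
rewrite opprB addrA subrK in H.
have := le_lt_trans H (ltrD A1 B1).
by rewrite /e -splitr ltxx.
Qed.

Lemma near_ball_ex (P : V -> Prop) (x : V) :
  (\forall y \near x, P y) -> exists2 d : R, 0 < d & forall y, `|x - y| < d -> P y.
Proof. by move/nbhs_normP => [d d0 Hd]; exists d; [exact: d0 | move=> y; exact: Hd]. Qed.

Lemma ball_near (P : V -> Prop) (x : V) (d : R) :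
  0 < d -> (forall y, `|x - y| < d -> P y) -> \forall y \near x, P y.
Proof. by move=> d0 Hd; apply/nbhs_normP; exists d; [exact: d0 | move=> y; exact: Hd]. Qed.

Lemma antisym_sum (a s : 'I_n -> 'I_n -> R) :
  (forall i j, a i j = - a j i) -> (forall i j, s i j = s j i) ->
  \sum_(i < n) \sum_(j < n) a i j * s i j = 0.
Proof.
move=> aA sS.
set S := \sum_(i < n) _.
have H : S = - S.
  rewrite {1}/S exchange_big /= /S -sumrN; apply: eq_bigr => j _.
  rewrite -sumrN; apply: eq_bigr => i _.
  by rewrite aA sS mulNr.
have : S *+ 2 = 0 by rewrite mulr2n {1}H addNr.
by rewrite -mulr_natr => /eqP; rewrite mulf_eq0 pnatr_eq0 orbF => /eqP.
Qed.

Lemma lie_poisson_anti (c : 'I_n -> 'I_n -> 'I_n -> R) i j x :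
  lie_structure_constants c -> lie_poisson c i j x = - lie_poisson c j i x.
Proof.
move=> [cA _]; rewrite /lie_poisson -sumrN; apply: eq_bigr => k _.
by rewrite cA mulNr.
Qed.

Lemma lie_poisson_derive (c : 'I_n -> 'I_n -> 'I_n -> R) i j x :
  is_derive x (delta_mx ord0 j : V) (lie_poisson c i j) (c i j j).
Proof.
have -> : c i j j = lie_poisson c i j (delta_mx ord0 j).
  rewrite /lie_poisson /Defs.coord (bigD1 j) //= big1 => [|k kj].
    by rewrite mxE !eqxx mulr1 addr0.
  by rewrite mxE eqxx /= (negbTE kj) mulr0.
apply: lin_is_derive => [a b|h a].
  rewrite /lie_poisson -big_split /=; apply: eq_bigr => k _.
  by rewrite /Defs.coord mxE mulrDr.
rewrite /lie_poisson mulr_sumr; apply: eq_bigr => k _.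
by rewrite /Defs.coord mxE mulrCA.
Qed.
End Aux.

Theorem proposition2p6 (R : realType) (n : nat)
  (c : 'I_n -> 'I_n -> 'I_n -> R) (f : 'rV[R]_n -> R) :
  lie_structure_constants c -> smooth f ->
  (last_multiplier (ham_vf c f) f <->
   forall x : 'rV[R]_n, \sum_(i < n) \sum_(j < n) c i j j * partial i f x = 0).
Proof.
move=> Hc sf.
have d0 : forall y, differentiable f y := fun y => sf [::] y.
have d1 : forall i y, differentiable (partial i f) y := fun i y => sf [:: i] y.
have d2 : forall i j y, differentiable (partial j (partial i f)) y :=
  fun i j y => sf [:: j; i] y.
have sym : forall i j y, partial j (partial i f) y = partial i (partial j f) y.
  move=> i j y; apply: (@clairaut R n f y (delta_mx ord0 j) (delta_mx ord0 i)).
  - by move=> z; apply: diff_derivable.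
  - by move=> z; apply: diff_derivable.
  - by move=> z; apply: diff_derivable (d1 i z).
  - by move=> z; apply: diff_derivable (d1 j z).
  - exact: differentiable_continuous (d2 i j y).
  - exact: differentiable_continuous (d2 j i y).
have key : forall x, vf_apply (ham_vf c f) f x + f x * divergence (ham_vf c f) x
    = f x * \sum_(i < n) \sum_(j < n) c i j j * partial i f x.
  move=> x.
  have -> : vf_apply (ham_vf c f) f x = 0.
    rewrite /vf_apply /ham_vf.
    under eq_bigr do rewrite mulr_suml.
    rewrite exchange_big /=.
    transitivity (\sum_(i < n) \sum_(j < n)
       lie_poisson c i j x * (partial i f x * partial j f x)).
      by apply: eq_bigr => i _; apply: eq_bigr => j _; rewrite mulrA.
    apply: antisym_sum => i j; [exact: lie_poisson_anti | exact: mulrC].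
  rewrite add0r; congr (_ * _).
  rewrite /divergence.
  have Dj : forall j, partial j (ham_vf c f j) x = \sum_(i < n)
      (lie_poisson c i j x * partial j (partial i f) x + partial i f x * c i j j).
    move=> j; rewrite /partial /ham_vf.
    have -> : (fun y => \sum_(i < n) lie_poisson c i j y * 'D_(delta_mx ord0 i) f y)
        = \sum_(i < n) (lie_poisson c i j * partial i f).
      by rewrite fct_sumE; apply/funext => y /=; apply: eq_bigr.
    have LP := fun i => @lie_poisson_derive R n c i j x.
    rewrite derive_sum; last first.
      move=> i; have [LPd _] := LP i; apply: derivableM; first exact: LPd.
      exact: diff_derivable (d1 i x).
    apply: eq_bigr => i _.
    have [LPd LPv] := LP i.
    rewrite deriveM; last first.
      exact: diff_derivable (d1 i x).
      exact: LPd.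
    by rewrite LPv.
  under eq_bigr do rewrite Dj big_split.
  rewrite big_split /= exchange_big /=.
  rewrite antisym_sum ?add0r.
  - rewrite exchange_big /=; apply: eq_bigr => i _; apply: eq_bigr => j _.
    by rewrite mulrC.
  - by move=> i j; exact: lie_poisson_anti.
  - by move=> i j; exact: sym.
split; last by move=> HG x; rewrite key HG mulr0.
move=> LM x0.
have H : forall y, f y * \sum_(i < n) \sum_(j < n) c i j j * partial i f y = 0.
  by move=> y; rewrite -key; exact: LM.
set G := fun y => \sum_(i < n) \sum_(j < n) c i j j * partial i f y.
change (G x0 = 0).
have [E|Gx0] := eqVneq (G x0) 0; [exact: E | exfalso].
set Gf := \sum_(i < n) ((\sum_(j < n) c i j j) *: partial i f).
have GE : Gf = G.
  rewrite /Gf fct_sumE; apply/funext => y /=; apply: eq_bigr => i _.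
  by rewrite -mulr_suml.
have Gc : {for x0, continuous G}.
  rewrite -GE; apply: differentiable_continuous.
  apply: differentiable_sum => i; apply: differentiableZ; exact: d1.
have G0 : 0 < `|G x0| by rewrite normr_gt0.
have [d dpos Hd] := @near_ball_ex R n _ x0 (cvgr_dist_lt _ _ Gc _ G0).
have fz : \forall y \near x0, f y = cst 0 y.
  apply: (@ball_near R n _ x0 d dpos).
  move=> y /Hd Hy.
  have Gy : G y != 0 by apply/eqP => Gy; move: Hy; rewrite Gy subr0 ltxx.
  have : f y * G y = 0 by exact: H.
  by move/eqP; rewrite mulf_eq0 (negbTE Gy) orbF => /eqP.
apply: (negP Gx0); apply/eqP; rewrite /G; apply: big1 => i _; apply: big1 => j _.
by rewrite /partial (near_eq_derive _ fz) derive_cst mulr0.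
Qed.
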